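(* Let $m\in\mathbb N$, $S$ a set of nonempty subsets of $\{0,\dots,m\}$, $(\beta_\sigma)_{\sigma\in S}$ elements of an ordered abelian group $G$, $(t_e)_{0\le e\le m}$ positive integers, and for $0\le e\le m$ let $(\gamma_{e,j})_{j<\lambda_e}$ ($\lambda_e$ a limit ordinal) be a well-ordered, monotone increasing family of elements $\ge0$ of $G$ without last element. For ordinals $j_e<\lambda_e$ and $\sigma\in S$ put $P_{\sigma,j_\sigma}=\beta_\sigma+\sum_{e\in\sigma}t_e\gamma_{e,j_e}$, where $j_\sigma=(j_e)_{e\in\sigma}$. Then for any ordinals $\rho_e<\lambda_e$ ($0\le e\le m$) there exist ordinals $\rho_e<j_e<\lambda_e$ ($0\le e\le m$) such that the elements $P_{\sigma,j_\sigma}$, $\sigma\in S$, are pairwise different. *)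

(* Defs.v *)
From mathcomp Require Import all_boot all_order all_algebra.
Set Implicit Arguments. Unset Strict Implicit. Unset Printing Implicit Defensive.
Import Order.TTheory GRing.Theory.
Local Open Scope ring_scope.

Definition ordered_abelian_group (G : zmodType) (le : rel G) : Prop :=
  [/\ reflexive le, antisymmetric le, transitive le, total le &
      forall x y z : G, le x y -> le (x + z) (y + z)].

Definition ltG (G : zmodType) (le : rel G) (x y : G) : bool := le x y && (x != y).

(* A well-ordered index set without a last element (order type a limit ordinal). *)
Definition limit_wellorder (d : Order.disp_t) (J : orderType d) : Prop :=
  well_founded (fun x y : J => (x < y)%O) /\ (forall j : J, exists k : J, (j < k)%O).

Definition Pval (G : zmodType) (m : nat) (d : Order.disp_t)
  (J : 'I_m.+1 -> orderType d) (beta : {set 'I_m.+1} -> G) (t : 'I_m.+1 -> nat)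
  (gamma : forall e, J e -> G) (sigma : {set 'I_m.+1}) (j : forall e, J e) : G :=
  beta sigma + \sum_(e in sigma) (gamma e (j e)) *+ t e.

(* Main.v *)
Require Import Defs.
From mathcomp Require Import all_boot all_order all_algebra.
From Stdlib Require Import Classical_Prop.
Import Order.TTheory GRing.Theory.
Local Open Scope ring_scope.

Section Aux.
Variables (G : zmodType) (le : rel G) (HG : ordered_abelian_group le).

Lemma leG_add2 x y u v : le x y -> le u v -> le (x + u) (y + v).
Proof.
case: HG => _ _ tr _ cp => hxy huv.
apply: (tr (y + u)); first exact: cp.
by rewrite (addrC y) (addrC y); apply: cp.
Qed.

Arguments leG_add2 {x y u v}.

Lemma ltG_add2 x y u v : ltG le x y -> le u v -> ltG le (x + u) (y + v).
Proof.
case: (HG) => _ an tr _ cp; rewrite /ltG => /andP[hxy nxy] huv.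
rewrite (leG_add2 hxy huv) /=; apply/eqP => E.
have h1 : le (x + u) (y + u) by apply: cp.
have h2 : le (y + u) (x + u) by rewrite E (addrC y) (addrC y); apply: cp.
have : x + u = y + u by apply: an; rewrite h1 h2.
by move/addIr => exy; rewrite exy eqxx in nxy.
Qed.

Arguments ltG_add2 {x y u v}.

Lemma ltG_mulrn a b n : ltG le a b -> ltG le (a *+ n.+1) (b *+ n.+1).
Proof.
move=> hab; elim: n => [|n IH]; first by rewrite !mulr1n.
rewrite (mulrS a) (mulrS b); apply: ltG_add2 => //.
by case/andP: IH.
Qed.
End Aux.

Lemma avoid (d : Order.disp_t) (J : orderType d) (I : eqType)
  (p : I -> J -> Prop) (Hp : forall i x y, p i x -> p i y -> x = y)
  (Hn : forall j : J, exists k : J, (j < k)%O) (s : seq I) (r : J) :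
  exists x, (r < x)%O /\ forall i, i \in s -> ~ p i x.
Proof.
elim: s r => [|i s IH] r.
  by case: (Hn r) => x hx; exists x; split.
case: (IH r) => x1 [h1 a1].
case: (classic (p i x1)) => [pix1|npx1]; last first.
  exists x1; split => // i'; rewrite in_cons => /orP[/eqP->//|]; exact: a1.
case: (IH x1) => x2 [h2 a2]; exists x2; split; first exact: lt_trans h2.
move=> i'; rewrite in_cons => /orP[/eqP->|]; last exact: a2.
move=> pix2; have := Hp _ _ _ pix1 pix2 => E; by rewrite E ltxx in h2.
Qed.

Lemma Pval_dfwith (G : zmodType) (m : nat) (d : Order.disp_t)
  (J : 'I_m.+1 -> orderType d) (beta : {set 'I_m.+1} -> G) (t : 'I_m.+1 -> nat)
  (gamma : forall e, J e -> G) (sigma : {set 'I_m.+1}) (j : forall e, J e)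
  (e0 : 'I_m.+1) (x : J e0) :
  Pval beta t gamma sigma (dfwith j x) =
  Pval beta t gamma sigma j +
    (if e0 \in sigma then gamma e0 x *+ t e0 - gamma e0 (j e0) *+ t e0 else 0).
Proof.
rewrite /Pval; case: (boolP (e0 \in sigma)) => H; last first.
  rewrite addr0; congr (_ + _); apply: eq_bigr => i Hi.
  rewrite dfwith_out //; apply: contraNneq H => ->; done.
rewrite (bigD1 e0 H) [in RHS](bigD1 e0 H) /= dfwith_in.
have -> : \sum_(i in sigma | i != e0) gamma i (dfwith j x i) *+ t i =
          \sum_(i in sigma | i != e0) gamma i (j i) *+ t i.
  apply: eq_bigr => i /andP[_ Hi]; rewrite dfwith_out // eq_sym //.
set A := gamma e0 x *+ t e0; set B := gamma e0 (j e0) *+ t e0.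
set R := \sum_(i in sigma | i != e0) _.
by rewrite -!addrA; congr (_ + _); rewrite (addrC R) !addrA [B + A]addrC addrK.
Qed.

Theorem lemma2p1 (G : zmodType) (le : rel G) (HG : ordered_abelian_group le)
  (m : nat) (S : {set {set 'I_m.+1}})
  (HS : forall sigma, sigma \in S -> sigma != set0)
  (beta : {set 'I_m.+1} -> G) (t : 'I_m.+1 -> nat) (Ht : forall e, (0 < t e)%N)
  (d : Order.disp_t) (J : 'I_m.+1 -> orderType d)
  (HJ : forall e, limit_wellorder (J e))
  (gamma : forall e, J e -> G)
  (Hgamma_mono : forall e (i k : J e), (i < k)%O -> ltG le (gamma e i) (gamma e k))
  (Hgamma_nonneg : forall e (i : J e), le 0 (gamma e i))
  (rho : forall e, J e) :
  exists j : forall e, J e,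
    (forall e, (rho e < j e)%O) /\
    (forall sigma tau, sigma \in S -> tau \in S -> sigma != tau ->
       Pval beta t gamma sigma j != Pval beta t gamma tau j).
Proof.
have main : forall k, (k <= m.+1)%N -> exists j : forall e, J e,
  (forall e : 'I_m.+1, (k <= e)%N \/ (rho e < j e)%O) /\
  (forall sigma tau, sigma \in S -> tau \in S -> sigma != tau ->
     (forall e : 'I_m.+1, (k <= e)%N -> (e \in sigma) = (e \in tau)) ->
     Pval beta t gamma sigma j != Pval beta t gamma tau j).
  elim => [_|k IH Hk].
    exists rho; split; first by left.
    move=> s u _ _ ne H; exfalso; move/eqP: ne; apply; apply/setP => e; exact: H.
  case: (IH (ltnW Hk)) => j [Hj1 Hj2].
  pose e0 : 'I_m.+1 := Ordinal Hk.
  pose p (st : ({set 'I_m.+1} * {set 'I_m.+1})%type) (x : J e0) : Prop :=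
    [/\ st.1 \in S, st.2 \in S, (e0 \in st.1) != (e0 \in st.2) &
        Pval beta t gamma st.1 (dfwith j x) = Pval beta t gamma st.2 (dfwith j x)].
  have Hp : forall i x y, p i x -> p i y -> x = y.
    case=> s u x y /= [_ _ ne Ex] [_ _ _ Ey].
    have E : gamma e0 x *+ t e0 = gamma e0 y *+ t e0.
      move: Ex Ey; rewrite !Pval_dfwith.
      case: (e0 \in s) (e0 \in u) ne => -[]//= _; rewrite addr0 => Ex Ey.
        have : Pval beta t gamma s j + (gamma e0 x *+ t e0 - gamma e0 (j e0) *+ t e0)
             = Pval beta t gamma s j + (gamma e0 y *+ t e0 - gamma e0 (j e0) *+ t e0)
          by rewrite Ex Ey.
        by move/addrI/addIr.
      have : Pval beta t gamma u j + (gamma e0 x *+ t e0 - gamma e0 (j e0) *+ t e0)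
           = Pval beta t gamma u j + (gamma e0 y *+ t e0 - gamma e0 (j e0) *+ t e0)
        by rewrite -Ex -Ey.
      by move/addrI/addIr.
    case: (ltgtP x y) => // h.
      have := @ltG_mulrn _ _ HG _ _ (t e0).-1 (Hgamma_mono _ _ _ h).
      by rewrite prednK // /ltG E eqxx andbF.
    have := @ltG_mulrn _ _ HG _ _ (t e0).-1 (Hgamma_mono _ _ _ h).
    by rewrite prednK // /ltG E eqxx andbF.
  case: (@avoid _ _ _ p Hp (proj2 (HJ e0))
          (enum [set: ({set 'I_m.+1} * {set 'I_m.+1})%type]) (rho e0)) => x [hx ax].
  exists (dfwith j x); split.
    move=> e; case: (eqVneq e0 e) => [<-|ne]; first by right; rewrite dfwith_in.
    rewrite dfwith_out //; case: (Hj1 e) => [h|h]; [left|by right].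
    rewrite ltn_neqAle h andbT; apply: contra ne => /eqP E.
    by apply/eqP/val_inj; rewrite /= E.
  move=> s u sS uS ne H.
  case: (boolP ((e0 \in s) == (e0 \in u))) => [/eqP same|diff].
    rewrite !Pval_dfwith same.
    have := Hj2 s u sS uS ne.
    have Hk' : forall e : 'I_m.+1, (k <= e)%N -> (e \in s) = (e \in u).
      move=> e; rewrite leq_eqVlt => /orP[/eqP ke|]; last exact: H.
      have -> : e = e0 by apply: val_inj; rewrite /= ke.
      exact: same.
    move/(_ Hk'); apply: contra => /eqP/addIr ->; done.
  apply/eqP => E; apply: (ax (s, u)); first by rewrite mem_enum in_setT.
  by split.
case: (main m.+1 (leqnn _)) => j [h1 h2]; exists j; split.
  by move=> e; case: (h1 e) => //; rewrite leqNgt ltn_ord.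
move=> s u sS uS ne; apply: h2 => // e; by rewrite leqNgt ltn_ord.
Qed.
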